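(* Let $P$ be a set of $n\geq 5$ points in general position in the plane and let $\mathcal{P}$ be the set of all closed segments with both endpoints in $P$. If $\mathcal{P}$ has a good-2-set, then $\mu(D(P))\geq\binom{n}{2}-8$.
   Context: General position means no three points collinear. Two segments cross if they meet in a single point interior to both; a segment is clean in $\mathcal{P}$ if no other segment of $\mathcal{P}$ crosses it. For disjoint segments $uv,xy\in\mathcal{P}$ let $\mathcal{D}(uv,xy):=\{uv,ux,uy,vx,vy,xy\}$ (a drawing of $K_4$); the two segments of $\{ux,uy,vx,vy\}$ lying in the interior of the convex hull of $\mathcal{D}(uv,xy)$ are its diagonals. $\mathcal{D}(uv,xy)$ is a good-2-set of $\mathcal{P}$ if: $uv$ and $xy$ are clean in $\mathcal{P}$; each of $uv$ and $xy$ has at least one endpoint on the boundary of the convex hull of $P$; and, letting $L$ and $R$ be the two opposite quadrants of the plane determined by the lines spanned by the two diagonals that are internally disjoint from $uv$ and $xy$, the interior of $L$ (resp. $R$) contains a segment $e_l$ (resp. $e_r$) of $\mathcal{P}$ not crossed by any segment of $\mathcal{P}\setminus\mathcal{D}(uv,xy)$. $D(P)$ is the graph with vertex set $\mathcal{P}$, two segments adjacent iff disjoint. For a graph $G$ and $U\subseteq V(G)$, two distinct vertices $x,y\in U$ are $U$-mutually visible if $G$ contains a shortest $x$-$y$ path none of whose internal vertices lies in $U$; $U$ is a mutual-visibility set if every two distinct vertices of $U$ are $U$-mutually visible. $\mu(G)$ is the maximum size of a mutual-visibility set of $G$. *)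

(* Defs.v *)
From HB Require Import structures.
From mathcomp Require Import all_boot all_order all_algebra.
From mathcomp Require Import boolp reals.

Set Implicit Arguments.
Unset Strict Implicit.
Unset Printing Implicit Defensive.
Import Order.TTheory GRing.Theory Num.Theory.
Local Open Scope ring_scope.

Section Graph.
Variables (T : finType) (e : rel T).

(* s = [:: v1; ...; vk] describes the walk x, v1, ..., vk with vk = y. *)
Definition walk (x y : T) (s : seq T) : bool := path e x s && (last x s == y).

Definition shortest_path (x y : T) (s : seq T) : Prop :=
  walk x y s /\ forall s', walk x y s' -> (size s <= size s')%N.

(* internal vertices of the walk x :: s are v1, ..., v(k-1) *)
Definition mutually_visible (U : {set T}) (x y : T) : Prop :=
  exists s, shortest_path x y s /\
            forall v, v \in take (size s).-1 s -> v \notin U.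

Definition mutual_visibility_set (U : {set T}) : Prop :=
  forall x y, x \in U -> y \in U -> x != y -> mutually_visible U x y.

Definition mu : nat :=
  \max_(U : {set T} | `[< mutual_visibility_set U >]) #|U|.
End Graph.

Section Geometry.
Variable R : realType.
Notation pt := (R * R)%type.

Definition det (a b c : pt) : R :=
  (b.1 - a.1) * (c.2 - a.2) - (b.2 - a.2) * (c.1 - a.1).

Definition on_seg (a b z : pt) : Prop :=
  exists t : R, 0 <= t /\ t <= 1 /\
    z = (a.1 + t * (b.1 - a.1), a.2 + t * (b.2 - a.2)).

Definition on_open_seg (a b z : pt) : Prop :=
  exists t : R, 0 < t /\ t < 1 /\
    z = (a.1 + t * (b.1 - a.1), a.2 + t * (b.2 - a.2)).

Definition interior_pt (S : pt -> Prop) (z : pt) : Prop :=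
  exists eps : R, 0 < eps /\
    forall w : pt, `|w.1 - z.1| < eps -> `|w.2 - z.2| < eps -> S w.
Definition closure_pt (S : pt -> Prop) (z : pt) : Prop :=
  forall eps : R, 0 < eps ->
    exists w : pt, S w /\ `|w.1 - z.1| < eps /\ `|w.2 - z.2| < eps.
Definition boundary_pt (S : pt -> Prop) (z : pt) : Prop :=
  closure_pt S z /\ ~ interior_pt S z.

Variable n : nat.
Variable p : 'I_n -> pt.

Definition in_hull (A : {set 'I_n}) (z : pt) : Prop :=
  exists w : 'I_n -> R,
    (forall i, 0 <= w i) /\ (forall i, i \notin A -> w i = 0) /\
    \sum_i w i = 1 /\
    z.1 = \sum_i w i * (p i).1 /\ z.2 = \sum_i w i * (p i).2.

Definition general_position : Prop :=
  forall i j k : 'I_n, i != j -> j != k -> i != k -> det (p i) (p j) (p k) != 0.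

(* The segments of calP: unordered pairs {i, j}, represented as i < j. *)
Definition segment := {ij : 'I_n * 'I_n | (ij.1 < ij.2)%N}.
Definition e1 (s : segment) : 'I_n := (sval s).1.
Definition e2 (s : segment) : 'I_n := (sval s).2.

Definition segP (s : segment) (z : pt) : Prop := on_seg (p (e1 s)) (p (e2 s)) z.

Definition seg_disjoint (s t : segment) : Prop := forall z, ~ (segP s z /\ segP t z).

Definition crosses (s t : segment) : Prop :=
  exists z, (forall w, (segP s w /\ segP t w) <-> w = z) /\
    z <> p (e1 s) /\ z <> p (e2 s) /\ z <> p (e1 t) /\ z <> p (e2 t).

Definition clean (s : segment) : Prop := forall t, ~ crosses t s.

Definition on_hull_boundary (z : pt) : Prop := boundary_pt (in_hull setT) z.

Definition Dverts (s1 s2 : segment) : {set 'I_n} :=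
  [set e1 s1; e2 s1; e1 s2; e2 s2].

Definition in_D (s1 s2 f : segment) : bool :=
  (e1 f \in Dverts s1 s2) && (e2 f \in Dverts s1 s2).

(* (a, b) is one of ux, uy, vx, vy and lies in the interior of the
   convex hull of D(uv, xy) (i.e. its relative interior does) *)
Definition diagonal (s1 s2 : segment) (a b : 'I_n) : Prop :=
  ((a == e1 s1) || (a == e2 s1)) && ((b == e1 s2) || (b == e2 s2)) /\
  forall z, on_open_seg (p a) (p b) z -> interior_pt (in_hull (Dverts s1 s2)) z.

Definition quadrant (a1 b1 a2 b2 : 'I_n) (sg1 sg2 : bool) (z : pt) : Prop :=
  (if sg1 then 0 < det (p a1) (p b1) z else det (p a1) (p b1) z < 0) /\
  (if sg2 then 0 < det (p a2) (p b2) z else det (p a2) (p b2) z < 0).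

Definition good_side (s1 s2 : segment) (Q : pt -> Prop) : Prop :=
  (forall z, Q z -> ~ segP s1 z /\ ~ segP s2 z) /\
  exists el : segment, (forall z, segP el z -> Q z) /\
    forall f : segment, ~~ in_D s1 s2 f -> ~ crosses f el.

Definition good2set (s1 s2 : segment) : Prop :=
  seg_disjoint s1 s2 /\ clean s1 /\ clean s2 /\
  (on_hull_boundary (p (e1 s1)) \/ on_hull_boundary (p (e2 s1))) /\
  (on_hull_boundary (p (e1 s2)) \/ on_hull_boundary (p (e2 s2))) /\
  exists a1 b1 a2 b2 : 'I_n,
    diagonal s1 s2 a1 b1 /\ diagonal s1 s2 a2 b2 /\ (a1, b1) != (a2, b2) /\
    exists sg1 sg2 : bool,
      good_side s1 s2 (quadrant a1 b1 a2 b2 sg1 sg2) /\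
      good_side s1 s2 (quadrant a1 b1 a2 b2 (~~ sg1) (~~ sg2)).

Definition has_good2set : Prop := exists s1 s2 : segment, good2set s1 s2.

Definition D_rel : rel segment := fun s t => `[< seg_disjoint s t >].

End Geometry.

(* Main.v *)
Require Import Defs.
From mathcomp Require Import all_boot all_order all_algebra.
From mathcomp Require Import boolp reals.
From mathcomp Require Import ring lra zify.
Set Implicit Arguments. Unset Strict Implicit. Unset Printing Implicit Defensive.
Import Order.TTheory GRing.Theory Num.Theory.
Local Open Scope ring_scope.
Section Geo.
Variable R : realType.
Variable n : nat.
Variable p : 'I_n -> R * R.

Lemma det_aff (a b A B : R * R) t :
  det a b (A.1 + t * (B.1 - A.1), A.2 + t * (B.2 - A.2)) =
  det a b A + t * (det a b B - det a b A).
Proof. rewrite /det /=; ring. Qed.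

Lemma det_l (a b : R * R) : det a b a = 0.
Proof. rewrite /det; ring. Qed.
Lemma det_r (a b : R * R) : det a b b = 0.
Proof. rewrite /det; ring. Qed.

Lemma segP_on_line (f : segment n) z :
  segP p f z -> det (p (e1 f)) (p (e2 f)) z = 0.
Proof.
by case=> t [_ [_ ->]]; rewrite det_aff det_l det_r subr0 mulr0 addr0.
Qed.

Lemma segP_e1 (f : segment n) : segP p f (p (e1 f)).
Proof.
exists 0; split; first by []. split; first by apply: ler01.
rewrite !mul0r; case: (p (e1 f)) => a0 b0 /=; by rewrite (addr0 a0) (addr0 b0).
Qed.

Lemma segP_e2 (f : segment n) : segP p f (p (e2 f)).
Proof.
exists 1; split; first by apply: ler01. split; first by [].
rewrite !mul1r; case: (p (e2 f)) => a0 b0; case: (p (e1 f)) => a1 b1 /=; by rewrite (addrC a1) (addrC b1) !subrK.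
Qed.

Definition orient (f : segment n) (w a : 'I_n) :=
  (e1 f = w /\ e2 f = a) \/ (e1 f = a /\ e2 f = w).

Lemma seg_sign (c : R) (A B : R * R) (f : segment n) w a z :
  orient f w a -> 0 <= c * det A B (p w) -> 0 < c * det A B (p a) ->
  segP p f z -> 0 < c * det A B z \/ z = p w.
Proof.
move=> [[E1 E2]|[E1 E2]] hw ha [t [t0 [t1 ->]]]; rewrite det_aff E1 E2.
- have [->|tp] := eqVneq t 0.
    right; rewrite !mul0r; case: (p w) => a0 b0 /=; by rewrite (addr0 a0) (addr0 b0).
  have tp' : 0 < t by rewrite lt_neqAle eq_sym tp t0.
  left.
  have t1' : 0 <= 1 - t by rewrite subr_ge0.
  have h1 := mulr_ge0 t1' hw.
  have h2 := mulr_gt0 tp' ha.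
  have -> : c * (det A B (p w) + t * (det A B (p a) - det A B (p w))) =
     (1 - t) * (c * det A B (p w)) + t * (c * det A B (p a)) by ring.
  lra.
- have [->|tp] := eqVneq t 1.
    right; rewrite !mul1r; case: (p w) => a0 b0; case: (p a) => a1 b1 /=; by rewrite (addrC a1) (addrC b1) !subrK.
  have tp' : 0 < 1 - t by rewrite subr_gt0 lt_neqAle tp t1.
  left.
  have h1 := mulr_ge0 t0 hw.
  have h2 := mulr_gt0 tp' ha.
  have -> : c * (det A B (p a) + t * (det A B (p w) - det A B (p a))) =
     (1 - t) * (c * det A B (p a)) + t * (c * det A B (p w)) by ring.
  lra.
Qed.

Lemma sep (c : R) (A B : R * R) (f g : segment n) w a w' b :
  injective p -> w != w' ->
  orient f w a -> orient g w' b ->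
  0 <= c * det A B (p w) -> 0 < c * det A B (p a) ->
  c * det A B (p w') <= 0 -> c * det A B (p b) < 0 ->
  seg_disjoint p f g.
Proof.
move=> inj ww' hof hog hw ha hw' hb z [zf zg].
have s1 := seg_sign hof hw ha zf.
have s2 := @seg_sign (- c) A B g w' b z hog.
rewrite !mulNr !oppr_ge0 !oppr_gt0 in s2.
have {s2} := s2 hw' hb zg.
case: s1 => [h1|->]; case => [h2|h2].
- lra.
- by move: hw'; rewrite -h2; lra.
- lra.
- by move/eqP: ww'; apply; apply: inj.
Qed.

Lemma e12 (f : segment n) : e1 f != e2 f.
Proof.
case: f => [[i j] /= h]; rewrite /e1 /e2 /=.
by apply/eqP => E; move: h; rewrite E ltnn.
Qed.

Lemma noncross_disj (f g : segment n) :
  general_position p ->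
  e1 f != e1 g -> e1 f != e2 g -> e2 f != e1 g -> e2 f != e2 g ->
  ~ crosses p f g -> seg_disjoint p f g.
Proof.
move=> gp h11 h12 h21 h22 nc z [zf zg]; apply: nc; exists z; split.
  move=> q; split; last by move=> ->; split.
  case=> qf qg.
  have dz := segP_on_line zf; have dq := segP_on_line qf.
  case: zg => s [_ [_ zE]]; case: qg => s' [_ [_ qE]].
  rewrite zE det_aff in dz; rewrite qE det_aff in dq.
  have [ss|ss] := eqVneq s s'; first by rewrite qE zE ss.
  exfalso.
  set d1 := det (p (e1 f)) (p (e2 f)) (p (e1 g)) in dz dq.
  set d2 := det (p (e1 f)) (p (e2 f)) (p (e2 g)) in dz dq.
  have : (s - s') * (d2 - d1) = 0 by rewrite mulrBl; lra.
  move/eqP; rewrite mulf_eq0 subr_eq0 (negbTE ss) /= subr_eq0 => /eqP d21.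
  rewrite d21 subrr mulr0 addr0 in dz.
  by move: (gp _ _ _ (e12 f) h21 h11); rewrite -/d1 dz eqxx.
split.
  move=> E; have := segP_on_line zg; rewrite E => /eqP.
  by apply/negP; apply: gp; rewrite ?e12 // eq_sym.
split.
  move=> E; have := segP_on_line zg; rewrite E => /eqP.
  by apply/negP; apply: gp; rewrite ?e12 // eq_sym.
split.
  move=> E; have := segP_on_line zf; rewrite E => /eqP.
  by apply/negP; apply: gp; rewrite ?e12.
move=> E; have := segP_on_line zf; rewrite E => /eqP.
by apply/negP; apply: gp; rewrite ?e12.
Qed.

Lemma diag_F1 (s1 s2 : segment n) a b (c : R) :
  a != b -> injective p -> c != 0 -> diagonal p s1 s2 a b ->
  (forall i, i \in Dverts s1 s2 -> 0 <= c * det (p a) (p b) (p i)) -> False.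
Proof.
move=> ab inj c0 [_ hint] hall.
pose A := p a; pose B := p b.
pose m := (A.1 + (1/2) * (B.1 - A.1), A.2 + (1/2) * (B.2 - A.2)).
have mo : on_open_seg A B m by exists (1/2); split; [lra | split; [lra|]].
have [eps [e0 heps]] := hint m mo.
pose d1 := B.1 - A.1; pose d2 := B.2 - A.2.
have N0 : 0 < d1 ^+ 2 + d2 ^+ 2.
  rewrite lt_neqAle addr_ge0 ?sqr_ge0 // andbT.
  apply/eqP => N0.
  have h1 : d1 ^+ 2 = 0.
    by apply/eqP; rewrite eq_le sqr_ge0 andbT; move: (sqr_ge0 d2); lra.
  have h2 : d2 ^+ 2 = 0.
    by apply/eqP; rewrite eq_le sqr_ge0 andbT; move: (sqr_ge0 d1); lra.
  move/eqP: h1; rewrite sqrf_eq0 subr_eq0 => /eqP h1.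
  move/eqP: h2; rewrite sqrf_eq0 subr_eq0 => /eqP h2.
  have : A = B by rewrite [A]surjective_pairing [B]surjective_pairing h1 h2.
  by move/inj/eqP; rewrite (negbTE ab).
pose K := 1 + `|c * d1| + `|c * d2|.
have K1 : 1 <= K by rewrite /K; move: (normr_ge0 (c * d1)) (normr_ge0 (c * d2)); lra.
pose dl := eps / (2 * K).
have dl0 : 0 < dl by rewrite /dl divr_gt0 //; lra.
have dlK : dl * K = eps / 2 by rewrite /dl; field; lra.
pose q := (m.1 + dl * (c * d2), m.2 - dl * (c * d1)).
have hq : in_hull p (Dverts s1 s2) q.
  apply: heps.
    have -> : q.1 - m.1 = dl * (c * d2) by rewrite /q /=; ring.
    rewrite normrM (gtr0_norm dl0).
    have : dl * `|c * d2| <= dl * K.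
      by rewrite ler_pM2l // /K; move: (normr_ge0 (c * d1)); lra.
    lra.
  have -> : q.2 - m.2 = - (dl * (c * d1)) by rewrite /q /=; ring.
  rewrite normrN normrM (gtr0_norm dl0).
  have : dl * `|c * d1| <= dl * K.
    by rewrite ler_pM2l // /K; move: (normr_ge0 (c * d2)); lra.
  lra.
have neg : c * det A B q < 0.
  have -> : c * det A B q = - (dl * (c ^+ 2 * (d1 ^+ 2 + d2 ^+ 2))).
    by rewrite /det /q /m /d1 /d2 /=; ring.
  rewrite oppr_lt0; apply: mulr_gt0 => //; apply: mulr_gt0 => //.
  by rewrite lt_neqAle sqr_ge0 andbT eq_sym sqrf_eq0.
case: hq => wt [wt0 [wtout [wsum [w1 w2]]]].
have E : \sum_i wt i * (c * det A B (p i)) = c * det A B q.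
  have -> : \sum_i wt i * (c * det A B (p i)) =
     \sum_i (c * d1 * (wt i * (p i).2) - c * d2 * (wt i * (p i).1)
             - c * (d1 * A.2 - d2 * A.1) * wt i).
    by apply: eq_bigr => i _; rewrite /det /d1 /d2; ring.
  rewrite !sumrB -!mulr_sumr wsum -w1 -w2 /det /d1 /d2; ring.
have : 0 <= \sum_i wt i * (c * det A B (p i)).
  apply: sumr_ge0 => i _; have [h|h] := boolP (i \in Dverts s1 s2).
    exact: mulr_ge0 (wt0 i) (hall i h).
  by rewrite wtout // mul0r.
lra.
Qed.

Definition E (h : segment n) (i : 'I_n) := (i == e1 h) || (i == e2 h).
Definition touch (f h : segment n) := E h (e1 f) || E h (e2 f).

Lemma DVE (s1 s2 : segment n) i : (i \in Dverts s1 s2) = E s1 i || E s2 i.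
Proof. by rewrite /Dverts !inE /E orbA. Qed.

Lemma in_DE (s1 s2 f : segment n) :
  in_D s1 s2 f = (E s1 (e1 f) || E s2 (e1 f)) && (E s1 (e2 f) || E s2 (e2 f)).
Proof. by rewrite /in_D !DVE. Qed.

Lemma E_seg h i : E h i -> segP p h (p i).
Proof. by case/orP => /eqP ->; [apply: segP_e1 | apply: segP_e2]. Qed.

Lemma touch_orient f h : touch f h -> exists w a, orient f w a /\ E h w.
Proof.
case/orP => H; first by exists (e1 f), (e2 f); split => //; left.
by exists (e2 f), (e1 f); split => //; right.
Qed.

Lemma orient_touch f w a h : orient f w a -> touch f h = E h w || E h a.
Proof. by rewrite /touch; case=> [[-> ->]|[-> ->]] //; rewrite orbC. Qed.

Lemma orient_inD s1 s2 f w a : orient f w a ->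
  in_D s1 s2 f = (E s1 w || E s2 w) && (E s1 a || E s2 a).
Proof. by rewrite in_DE; case=> [[-> ->]|[-> ->]] //; rewrite andbC. Qed.

Lemma sd_sym f g : seg_disjoint p f g -> seg_disjoint p g f.
Proof. by move=> H z [h1 h2]; apply: (H z). Qed.

Lemma nt_disj f h : general_position p -> ~~ touch f h -> ~ crosses p f h ->
  seg_disjoint p f h.
Proof.
move=> gp; rewrite /touch /E !negb_or => /andP[/andP[h1 h2] /andP[h3 h4]].
exact: noncross_disj.
Qed.

Section Key.
Variables (S1 S2 el er : segment n) (cp cn : R) (Ap Bp An Bn : R * R).
Hypothesis inj : injective p.
Hypothesis gp : general_position p.
Hypothesis hS12 : forall i, E S1 i -> ~~ E S2 i.
Hypothesis hL1 : forall i, E el i -> ~~ E S1 i.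
Hypothesis hL2 : forall i, E el i -> ~~ E S2 i.
Hypothesis hL3 : forall i, E el i -> ~~ E er i.
Hypothesis hR1 : forall i, E er i -> ~~ E S1 i.
Hypothesis hR2 : forall i, E er i -> ~~ E S2 i.
Hypothesis hP1 : forall i, E S1 i ->
  0 <= cp * det Ap Bp (p i) /\ cn * det An Bn (p i) <= 0.
Hypothesis hP2 : forall i, E S2 i ->
  cp * det Ap Bp (p i) <= 0 /\ 0 <= cn * det An Bn (p i).
Hypothesis hLs : forall i, E el i ->
  0 < cp * det Ap Bp (p i) /\ 0 < cn * det An Bn (p i).
Hypothesis hRs : forall i, E er i ->
  cp * det Ap Bp (p i) < 0 /\ cn * det An Bn (p i) < 0.

Lemma key f g : ~~ in_D S1 S2 f -> ~~ in_D S1 S2 g -> touch f S1 ->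
  touch f S2 || touch g S2 -> touch f el || touch g el ->
  touch f er || touch g er -> seg_disjoint p f g.
Proof.
move=> nf ng t1 t2 tl tr.
have [w [a [hof Ew]]] := touch_orient t1.
rewrite (orient_inD _ _ hof) Ew /= negb_or in nf.
case/andP: nf => a1 a2.
have w2 := hS12 Ew.
rewrite (orient_touch _ hof) (negbTE w2) (negbTE a2) /= in t2.
have [w' [b [hog Ew']]] := touch_orient t2.
rewrite (orient_inD _ _ hog) Ew' orbT /= negb_or in ng.
case/andP: ng => b1 b2.
have wl : ~~ E el w by apply/negP => /hL1; rewrite Ew.
have w'l : ~~ E el w' by apply/negP => /hL2; rewrite Ew'.
have wr : ~~ E er w by apply/negP => /hR1; rewrite Ew.
have w'r : ~~ E er w' by apply/negP => /hR2; rewrite Ew'.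
rewrite (orient_touch _ hof) (orient_touch _ hog) (negbTE wl) (negbTE w'l) /= in tl.
rewrite (orient_touch _ hof) (orient_touch _ hog) (negbTE wr) (negbTE w'r) /= in tr.
have ww' : w != w' by apply/eqP => E0; move: (hS12 Ew); rewrite E0 Ew'.
case/orP: tl => [la|lb].
  have ra := hL3 la; rewrite (negbTE ra) /= in tr.
  exact: (sep inj ww' hof hog (hP1 Ew).1 (hLs la).1 (hP2 Ew').1 (hRs tr).1).
have rb := hL3 lb; rewrite (negbTE rb) orbF in tr.
apply: sd_sym.
have w'w : w' != w by rewrite eq_sym.
exact: (sep inj w'w hog hof (hP2 Ew').2 (hLs lb).2 (hP1 Ew).2 (hRs tr).2).
Qed.

Hypothesis cl1 : clean p S1.
Hypothesis cl2 : clean p S2.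
Hypothesis ncl : forall f, ~~ in_D S1 S2 f -> ~ crosses p f el.
Hypothesis ncr : forall f, ~~ in_D S1 S2 f -> ~ crosses p f er.

Lemma common f g : ~~ in_D S1 S2 f -> ~~ in_D S1 S2 g -> ~ seg_disjoint p f g ->
  exists h, (h = S1 \/ h = S2 \/ h = el \/ h = er) /\
            seg_disjoint p f h /\ seg_disjoint p h g.
Proof.
move=> nf ng nd.
have D h : ~ crosses p f h -> ~ crosses p g h -> ~~ touch f h -> ~~ touch g h ->
    (h = S1 \/ h = S2 \/ h = el \/ h = er) ->
    exists h, (h = S1 \/ h = S2 \/ h = el \/ h = er) /\
            seg_disjoint p f h /\ seg_disjoint p h g.
  move=> c1 c2 t1 t2 hh; exists h; split => //; split; first exact: nt_disj.
  by apply: sd_sym; apply: nt_disj.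
case T1 : (touch f S1 || touch g S1); last first.
  by move/norP: T1 => [t1 t2]; apply: (D S1); [apply: cl1 | apply: cl1 | exact: t1 | exact: t2 | left].
case T2 : (touch f S2 || touch g S2); last first.
  by move/norP: T2 => [t1 t2]; apply: (D S2); [apply: cl2 | apply: cl2 | exact: t1 | exact: t2 | right; left].
case TL : (touch f el || touch g el); last first.
  by move/norP: TL => [t1 t2]; apply: (D el); [apply: ncl | apply: ncl | exact: t1 | exact: t2 | right; right; left].
case TR : (touch f er || touch g er); last first.
  by move/norP: TR => [t1 t2]; apply: (D er); [apply: ncr | apply: ncr | exact: t1 | exact: t2 | right; right; right].
exfalso; apply: nd.
case/orP: T1 => t1; first exact: key.
apply: sd_sym; apply: key => //; by rewrite orbC.
Qed.
End Key.
End Geo.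


Lemma mvs_of (T : finType) (e : rel T) (U : {set T}) :
  (forall x y, x \in U -> y \in U -> x != y -> ~~ e x y ->
     exists h, h \notin U /\ e x h /\ e h y) ->
  mutual_visibility_set e U.
Proof.
move=> H x y xU yU xy.
case exy : (e x y).
  exists [:: y]; split; last by move=> v; rewrite /= in_nil.
  split; first by rewrite /walk /= exy eqxx.
  case => [|z s']; last by [].
  by rewrite /walk /= => /eqP E; move: xy; rewrite E eqxx.
have [h [hU [exh ehy]]] := H x y xU yU xy (negbT exy).
exists [:: h; y]; split; last first.
  by move=> v; rewrite /= inE => /eqP ->.
split; first by rewrite /walk /= exh ehy eqxx.
case => [|z [|z' s']] //.
  by rewrite /walk /= => /eqP E; move: xy; rewrite E eqxx.
by rewrite /walk /= andbT => /andP[exz /eqP E]; move: exy; rewrite -E exz.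
Qed.

Lemma mu_ge (T : finType) (e : rel T) (U : {set T}) :
  mutual_visibility_set e U -> (#|U| <= mu e)%N.
Proof.
move=> H; rewrite /mu.
exact: (@leq_bigmax_cond _ (fun U => `[< mutual_visibility_set e U >]) (fun U => #|U|) U (asboolT H)).
Qed.

Section Count.
Variable n : nat.
Definition phi (f : segment n) : {set 'I_n} := [set e1 f; e2 f].

Lemma pair_inj (a b c d : 'I_n) : (a < b)%N -> (c < d)%N ->
  [set a; b] = [set c; d] -> a = c /\ b = d.
Proof.
move=> ab cd E.
have : a \in [set c; d] by rewrite -E !inE eqxx.
have : b \in [set c; d] by rewrite -E !inE eqxx orbT.
have : c \in [set a; b] by rewrite E !inE eqxx.
have : d \in [set a; b] by rewrite E !inE eqxx orbT.
rewrite !inE => /orP[] /eqP H1 /orP[] /eqP H2 /orP[] /eqP H3 /orP[] /eqP H4;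
  subst; split => //; exfalso; move: ab cd; lia.
Qed.

Lemma phi_inj : injective phi.
Proof.
move=> [[a b] hab] [[c d] hcd] /= E.
have [E1 E2] := pair_inj hab hcd E.
by apply: val_inj => /=; move: E1 E2; rewrite /e1 /e2 /= => -> ->.
Qed.

Lemma card_seg : #|{: segment n}| = 'C(n, 2).
Proof.
rewrite -[n in 'C(n, _)]card_ord -card_draws -(card_imset _ phi_inj).
apply: eq_card => A; rewrite inE.
apply/imsetP/idP.
  case=> f _ ->; rewrite /phi cards2; by have := e12 f => ->.
case/cards2P => x [y [xy ->]].
have [lt|gt|eq] := ltngtP x y.
- by exists (exist (fun ij : 'I_n * 'I_n => (ij.1 < ij.2)%N) (x, y) lt) => //.
- exists (exist (fun ij : 'I_n * 'I_n => (ij.1 < ij.2)%N) (y, x) gt) => //.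
  by rewrite /phi /e1 /e2 /= setUC.
- by move: xy; rewrite (val_inj eq) eqxx.
Qed.

Lemma card_inD (s1 s2 : segment n) :
  (#|[set f | in_D s1 s2 f]| <= 6)%N.
Proof.
rewrite -(card_imset _ phi_inj).
apply: (@leq_trans #|[set A : {set 'I_n} | A \subset Dverts s1 s2 & #|A| == 2%N]|).
  apply: subset_leq_card; apply/subsetP => A /imsetP[f].
  rewrite inE /in_D => /andP[h1 h2] ->.
  rewrite inE /phi cards2 e12 andbT.
  by apply/subsetP => i; rewrite in_set2 => /orP[] /eqP ->.
rewrite cards_draws.
have : (#|Dverts s1 s2| <= 4)%N.
  apply: (@leq_trans #|[:: e1 s1; e2 s1; e1 s2; e2 s2]|); last exact: card_size.
  apply: subset_leq_card; apply/subsetP => i; rewrite /Dverts !inE.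
  by rewrite -!orbA.
by case: #|_| => [|[|[|[|[|]]]]].
Qed.
End Count.

Lemma line_signs (R : realType) (gu gv gx gy : R) :
 (gu = 0 /\ gv != 0) \/ (gv = 0 /\ gu != 0) ->
 (gx = 0 /\ gy != 0) \/ (gy = 0 /\ gx != 0) ->
 ~ (0 <= gu /\ 0 <= gv /\ 0 <= gx /\ 0 <= gy) ->
 ~ (gu <= 0 /\ gv <= 0 /\ gx <= 0 /\ gy <= 0) ->
 (0 <= gu /\ 0 <= gv /\ 0 < gu + gv /\ gx <= 0 /\ gy <= 0) \/
 (gu <= 0 /\ gv <= 0 /\ gu + gv < 0 /\ 0 <= gx /\ 0 <= gy).
Proof.
move=> h1 h2.
case: h1 => [[-> hv]|[-> hu]]; case: h2 => [[-> hy]|[-> hx]] => n1 n2.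
- move: hv hy; rewrite !neq_lt => /orP[hv|hv] /orP[hy|hy].
  + by exfalso; apply: n2; repeat split; lra.
  + by right; repeat split; lra.
  + by left; repeat split; lra.
  + by exfalso; apply: n1; repeat split; lra.
- move: hv hx; rewrite !neq_lt => /orP[hv|hv] /orP[hy|hy].
  + by exfalso; apply: n2; repeat split; lra.
  + by right; repeat split; lra.
  + by left; repeat split; lra.
  + by exfalso; apply: n1; repeat split; lra.
- move: hu hy; rewrite !neq_lt => /orP[hv|hv] /orP[hy|hy].
  + by exfalso; apply: n2; repeat split; lra.
  + by right; repeat split; lra.
  + by left; repeat split; lra.
  + by exfalso; apply: n1; repeat split; lra.
- move: hu hx; rewrite !neq_lt => /orP[hv|hv] /orP[hy|hy].
  + by exfalso; apply: n2; repeat split; lra.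
  + by right; repeat split; lra.
  + by left; repeat split; lra.
  + by exfalso; apply: n1; repeat split; lra.
Qed.

Section Main.
Variable R : realType.
Variable n : nat.
Variable p : 'I_n -> R * R.

Lemma E12 (S1 S2 : segment n) i j : seg_disjoint p S1 S2 ->
  E S1 i -> E S2 j -> i != j.
Proof.
move=> disj h1 h2; apply/eqP => ij; rewrite ij in h1.
by apply: (disj (p j)); split; apply: E_seg.
Qed.

Lemma line_fact (S1 S2 : segment n) a b (c : R) :
  general_position p -> injective p -> c != 0 -> seg_disjoint p S1 S2 ->
  diagonal p S1 S2 a b ->
  let g i := c * det (p a) (p b) (p i) in
  (0 <= g (e1 S1) /\ 0 <= g (e2 S1) /\ 0 < g (e1 S1) + g (e2 S1) /\
     g (e1 S2) <= 0 /\ g (e2 S2) <= 0) \/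
  (g (e1 S1) <= 0 /\ g (e2 S1) <= 0 /\ g (e1 S1) + g (e2 S1) < 0 /\
     0 <= g (e1 S2) /\ 0 <= g (e2 S2)).
Proof.
move=> gp inj c0 disj dg g; case: (dg) => /andP[ha hb] _.
have Eu : E S1 (e1 S1) by rewrite /E eqxx.
have Ev : E S1 (e2 S1) by rewrite /E eqxx orbT.
have Ex : E S2 (e1 S2) by rewrite /E eqxx.
have Ey : E S2 (e2 S2) by rewrite /E eqxx orbT.
have ab : a != b := E12 disj ha hb.
have uv := e12 S1; have xy := e12 S2.
have nz i : a != i -> b != i -> g i != 0.
  by move=> ai bi; rewrite /g mulf_neq0 // gp.
have za : g a = 0 by rewrite /g det_l mulr0.
have zb : g b = 0 by rewrite /g det_r mulr0.
apply: line_signs.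
- case/orP: ha => /eqP ea; [left | right]; rewrite -ea; split => //; apply: nz.
  + by rewrite ea.
  + by rewrite eq_sym; apply: (E12 disj Ev hb).
  + by rewrite ea eq_sym.
  + by rewrite eq_sym; apply: (E12 disj Eu hb).
- case/orP: hb => /eqP eb; [left | right]; rewrite -eb; split => //; apply: nz.
  + by apply: (E12 disj ha Ey).
  + by rewrite eb.
  + by apply: (E12 disj ha Ex).
  + by rewrite eb eq_sym.
- move=> [h1 [h2 [h3 h4]]]; apply: (diag_F1 ab inj c0 dg) => i.
  by rewrite DVE /E -!orbA => /or4P [] /eqP ->.
- move=> [h1 [h2 [h3 h4]]].
  have c0' : - c != 0 by rewrite oppr_eq0.
  apply: (diag_F1 ab inj c0' dg) => i.
  by rewrite DVE /E -!orbA mulNr oppr_ge0 => /or4P [] /eqP ->.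
Qed.
End Main.

Lemma quadE (R : realType) (sg : bool) (d : R) :
  (if sg then 0 < d else d < 0) = (0 < (if sg then 1 else -1) * d).
Proof. by case: sg; rewrite ?mul1r ?mulN1r ?oppr_gt0. Qed.

Lemma quadNE (R : realType) (sg : bool) (d : R) :
  (if ~~ sg then 0 < d else d < 0) = ((if sg then 1 else -1) * d < 0).
Proof. by case: sg; rewrite /= ?mul1r ?mulN1r ?oppr_lt0. Qed.

Lemma sgn_neq0 (R : realType) (sg : bool) : (if sg then 1 else -1 : R) != 0.
Proof. by case: sg; rewrite ?oppr_eq0 oner_eq0. Qed.

Theorem proposition13 (R : realType) (n : nat) (p : 'I_n -> R * R) :
  (5 <= n)%N -> injective p -> general_position p -> has_good2set p ->
  ('C(n, 2) - 8 <= mu (D_rel p))%N.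
Proof.
move=> n5 inj gp [S1 [S2 [disj [cl1 [cl2 [_ [_ H]]]]]]].
case: H => a1 [b1 [a2 [b2 [dg1 [dg2 [_ [sg1 [sg2 [GS GS']]]]]]]]].
case: GS => qS [el [elQ ncl]].
case: GS' => qS' [er [erQ ncr]].
pose c1 : R := if sg1 then 1 else -1.
pose c2 : R := if sg2 then 1 else -1.
have c10 : c1 != 0 by apply: sgn_neq0.
have c20 : c2 != 0 by apply: sgn_neq0.
pose G1 z := c1 * det (p a1) (p b1) z.
pose G2 z := c2 * det (p a2) (p b2) z.
have hQ z : quadrant p a1 b1 a2 b2 sg1 sg2 z <-> 0 < G1 z /\ 0 < G2 z.
  rewrite /quadrant /G1 /G2 /c1 /c2.
  by rewrite !quadE.
have hQ' z : quadrant p a1 b1 a2 b2 (~~ sg1) (~~ sg2) z <-> G1 z < 0 /\ G2 z < 0.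
  rewrite /quadrant /G1 /G2 /c1 /c2.
  by rewrite !quadNE.
have L1 := line_fact gp inj c10 disj dg1.
have L2 := line_fact gp inj c20 disj dg2.
rewrite /= in L1 L2.
pose u := e1 S1; pose v := e2 S1.
pose mS := ((p u).1 + (1/2) * ((p v).1 - (p u).1), (p u).2 + (1/2) * ((p v).2 - (p u).2)).
have mS1 : segP p S1 mS by exists (1/2); split; [lra | split; [lra | by []]].
have Gm c A B : c * det A B mS = (c * det A B (p u) + c * det A B (p v)) / 2.
  by rewrite det_aff; field.
have noPP : ~ (0 < G1 (p u) + G1 (p v) /\ 0 < G2 (p u) + G2 (p v)).
  move=> [h1 h2]; have : quadrant p a1 b1 a2 b2 sg1 sg2 mS.
    by apply/hQ; rewrite /G1 /G2 !Gm; rewrite /G1 /G2 in h1 h2; split; lra.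
  by move/qS => [].
have noNN : ~ (G1 (p u) + G1 (p v) < 0 /\ G2 (p u) + G2 (p v) < 0).
  move=> [h1 h2]; have : quadrant p a1 b1 a2 b2 (~~ sg1) (~~ sg2) mS.
    by apply/hQ'; rewrite /G1 /G2 !Gm; rewrite /G1 /G2 in h1 h2; split; lra.
  by move/qS' => [].
have hS12 i : E S1 i -> ~~ E S2 i.
  by move=> h; apply/negP => h'; apply: (disj (p i)); split; apply: E_seg.
have elQ' i : E el i -> 0 < G1 (p i) /\ 0 < G2 (p i).
  by move=> h; apply/hQ; apply: elQ; apply: E_seg.
have erQ' i : E er i -> G1 (p i) < 0 /\ G2 (p i) < 0.
  by move=> h; apply/hQ'; apply: erQ; apply: E_seg.
have hL1 i : E el i -> ~~ E S1 i.
  move=> h; apply/negP => h'.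
  have [hn1 hn2] := qS (p i) (elQ _ (E_seg p h)); apply: hn1; exact (E_seg p h').
have hL2 i : E el i -> ~~ E S2 i.
  move=> h; apply/negP => h'.
  have [hn1 hn2] := qS (p i) (elQ _ (E_seg p h)); apply: hn2; exact (E_seg p h').
have hR1 i : E er i -> ~~ E S1 i.
  move=> h; apply/negP => h'.
  have [hn1 hn2] := qS' (p i) (erQ _ (E_seg p h)); apply: hn1; exact (E_seg p h').
have hR2 i : E er i -> ~~ E S2 i.
  move=> h; apply/negP => h'.
  have [hn1 hn2] := qS' (p i) (erQ _ (E_seg p h)); apply: hn2; exact (E_seg p h').
have hL3 i : E el i -> ~~ E er i.
  move=> h; apply/negP => h'.
  have := elQ' i h; have := erQ' i h'; lra.
have comm : forall f g, ~~ in_D S1 S2 f -> ~~ in_D S1 S2 g ->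
    ~ seg_disjoint p f g ->
    exists h, (h = S1 \/ h = S2 \/ h = el \/ h = er) /\
            seg_disjoint p f h /\ seg_disjoint p h g.
  case: L1 => [[u1 [v1 [s1 [x1 y1]]]] | [u1 [v1 [s1 [x1 y1]]]]];
  case: L2 => [[u2 [v2 [s2 [x2 y2]]]] | [u2 [v2 [s2 [x2 y2]]]]].
  - by exfalso; apply: noPP; rewrite /G1 /G2 /u /v; split; lra.
  - move=> f g; apply: (common (cp := c1) (Ap := p a1) (Bp := p b1)
       (cn := c2) (An := p a2) (Bn := p b2) inj gp hS12 hL1 hL2 hL3 hR1 hR2) => //.
    + by move=> i /orP[] /eqP ->; split.
    + by move=> i /orP[] /eqP ->; split.
  - move=> f g; apply: (common (cp := c2) (Ap := p a2) (Bp := p b2)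
       (cn := c1) (An := p a1) (Bn := p b1) inj gp hS12 hL1 hL2 hL3 hR1 hR2) => //.
    + by move=> i /orP[] /eqP ->; split.
    + by move=> i /orP[] /eqP ->; split.
    + by move=> i /elQ' [].
    + by move=> i /erQ' [].
  - by exfalso; apply: noNN; rewrite /G1 /G2 /u /v; split; lra.
pose X := [set f | in_D S1 S2 f] :|: [set el; er].
pose U := ~: X.
have inDS1 : in_D S1 S2 S1 by rewrite in_DE /E !eqxx /= !orbT.
have inDS2 : in_D S1 S2 S2 by rewrite in_DE /E !eqxx /= !orbT.
have mv : mutual_visibility_set (D_rel p) U.
  apply: mvs_of => f g fU gU _ nfg.
  move: fU gU; rewrite !inE !negb_or => /andP[nf _] /andP[ng _].
  have nd : ~ seg_disjoint p f g by move=> H; move/negP: nfg; apply; apply: asboolT.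
  have [h [hh [fh hg]]] := comm f g nf ng nd.
  exists h; split; last by split; apply: asboolT.
  rewrite !inE negbK.
  by case: hh => [->|[->|[->|->]]]; rewrite ?inDS1 ?inDS2 ?eqxx ?orbT.
apply: leq_trans (mu_ge mv).
have cX : (#|X| <= 8)%N.
  apply: leq_trans (leq_card_setU _ _) _.
  have c2' : (#|[set el; er]| <= 2)%N by rewrite cards2; case: (el != er).
  exact: (leq_add (card_inD S1 S2) c2').
rewrite -card_seg -(cardsC X) -/U leq_subLR leq_add2r.
exact: cX.
Qed.
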